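(* Let $(R,\mathfrak m)$ be a one-dimensional Cohen–Macaulay local ring and let $I$ be a regular trace ideal of $R$. Assume there exists $q\in I$ with $I^2=qI$. Then $$\mathcal T(I:I)=\{q^{-1}Y\mid Y\in\mathcal T(R),\ Y\subseteq I\}.$$
   Context: $Q(R)$ is the total ring of fractions and $I:I=\{x\in Q(R)\mid xI\subseteq I\}$. An ideal is regular if it contains a non-zerodivisor. For a ring $A$, the trace ideal of an $A$-module $M$ is $\sum_{f\in\mathrm{Hom}_A(M,A)}\mathrm{Im}f$, and $\mathcal T(A)$ is the set of regular trace ideals of $A$. *)

(* Defs.v *)
From Stdlib Require Import List.
From mathcomp Require Import all_boot all_order all_algebra.
Set Implicit Arguments. Unset Strict Implicit. Unset Printing Implicit Defensive.
Import GRing.Theory.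
Local Open Scope ring_scope.

Section Ideals.
Variable R : comNzRingType.

Definition is_ideal (I : R -> Prop) : Prop :=
  I 0 /\ (forall x y, I x -> I y -> I (x + y)) /\ (forall a x, I x -> I (a * x)).

Definition subset_of (I J : R -> Prop) : Prop := forall x, I x -> J x.

Definition proper_ideal (I : R -> Prop) : Prop := is_ideal I /\ ~ I 1.

Definition prime_ideal (P : R -> Prop) : Prop :=
  proper_ideal P /\ forall a b, P (a * b) -> P a \/ P b.

Definition maximal_ideal (M : R -> Prop) : Prop :=
  proper_ideal M /\
  forall J, proper_ideal J -> subset_of M J -> subset_of J M.

Definition local_ring_with (m : R -> Prop) : Prop :=
  maximal_ideal m /\ forall m', maximal_ideal m' -> forall x, m' x <-> m x.

Definition gen_by (s : seq R) (x : R) : Prop :=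
  exists c : nat -> R, x = \sum_(i < size s) c i * s`_i.

Definition noetherian : Prop :=
  forall I, is_ideal I -> exists s : seq R, forall x, I x <-> gen_by s x.

Definition strict_subset (I J : R -> Prop) : Prop :=
  subset_of I J /\ exists x, J x /\ ~ I x.

Definition prime_chain (n : nat) (P : nat -> R -> Prop) : Prop :=
  (forall i, (i <= n)%N -> prime_ideal (P i)) /\
  (forall i, (i < n)%N -> strict_subset (P i) (P i.+1)).

Definition krull_dim (d : nat) : Prop :=
  (exists P, prime_chain d P) /\ ~ (exists P, prime_chain d.+1 P).

Definition regular_seq (s : seq R) : Prop :=
  (forall i, (i < size s)%N -> forall y,
      gen_by (take i s) (s`_i * y) -> gen_by (take i s) y) /\
  ~ gen_by s 1.

Definition depth (m : R -> Prop) (d : nat) : Prop :=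
  (exists s, size s = d /\ (forall x, x \in s -> m x) /\ regular_seq s) /\
  (forall s, (forall x, x \in s -> m x) -> regular_seq s -> (size s <= d)%N).

Definition one_dim_CM_local (m : R -> Prop) : Prop :=
  noetherian /\ local_ring_with m /\ krull_dim 1 /\ depth m 1.

Definition nonzerodivisor (x : R) : Prop := forall y, x * y = 0 -> y = 0.

Definition regular_ideal (I : R -> Prop) : Prop :=
  exists x, I x /\ nonzerodivisor x.

Definition ideal_sq (I : R -> Prop) (x : R) : Prop :=
  exists s : seq (R * R), (forall p, List.In p s -> I p.1 /\ I p.2) /\
    x = \sum_(p <- s) p.1 * p.2.

Definition ideal_scale (q : R) (I : R -> Prop) (x : R) : Prop :=
  exists y, I y /\ x = q * y.

Definition is_hom (M : lmodType R) (f : M -> R) : Prop :=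
  forall a (x y : M), f (a *: x + y) = a * f x + f y.

Definition trace_of (M : lmodType R) (x : R) : Prop :=
  exists s : seq ((M -> R) * M), (forall p, List.In p s -> is_hom p.1) /\
    x = \sum_(p <- s) p.1 p.2.

Definition is_trace_ideal (X : R -> Prop) : Prop :=
  exists M : lmodType R, forall x, X x <-> trace_of M x.

Definition in_T (X : R -> Prop) : Prop := is_trace_ideal X /\ regular_ideal X.

End Ideals.

Definition total_ring_of_fractions (R : comNzRingType) (Q : comUnitRingType)
    (iota : R -> Q) : Prop :=
  injective iota /\
  (forall s, nonzerodivisor s -> iota s \is a GRing.unit) /\
  (forall z, exists a s, nonzerodivisor s /\ z = iota a / iota s).

Definition colon_self (R : comNzRingType) (Q : comUnitRingType)
    (iota : R -> Q) (I : R -> Prop) (z : Q) : Prop :=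
  forall y, I y -> exists y', I y' /\ z * iota y = iota y'.

(* Main.v *)
Set Warnings "-notation-overridden,-ambiguous-paths,-redundant-canonical-projection".
Require Import Defs.
From HB Require Import structures.
From mathcomp Require Import all_boot all_order all_algebra.
From mathcomp Require Import boolp ring.
Set Implicit Arguments. Unset Strict Implicit. Unset Printing Implicit Defensive.
Import GRing.Theory.
Local Open Scope ring_scope.

Definition subP (S : comNzRingType) (X : S -> Prop) (x : S) : Prop := is_ideal X -> X x.
Definition subT (S : comNzRingType) (X : S -> Prop) := {x : S | subP X x}.

HB.instance Definition _ (S : comNzRingType) (X : S -> Prop) := gen_eqMixin (subT X).
HB.instance Definition _ (S : comNzRingType) (X : S -> Prop) := gen_choiceMixin (subT X).

Section Sub.
Lemma subP0 (S : comNzRingType) (X : S -> Prop) : subP X 0.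
Proof. by move=> [? _]. Qed.
Lemma subPD (S : comNzRingType) (X : S -> Prop) x y : subP X x -> subP X y -> subP X (x + y).
Proof. by move=> hx hy hI; case: (hI) => [_ [hD _]]; apply: (hD); [apply: hx|apply: hy]. Qed.
Lemma subPM (S : comNzRingType) (X : S -> Prop) a x : subP X x -> subP X (a * x).
Proof. by move=> hx hI; case: (hI) => [_ [_ hM]]; apply: (hM); apply: (hx). Qed.
Lemma subPN (S : comNzRingType) (X : S -> Prop) x : subP X x -> subP X (- x).
Proof. by move=> hx; rewrite -mulN1r; apply: (subPM). Qed.
End Sub.

Definition sub0 (S : comNzRingType) (X : S -> Prop) : subT X := exist _ 0 (@subP0 S X).
Definition subadd (S : comNzRingType) (X : S -> Prop) (u v : subT X) : subT X :=
  exist _ (sval u + sval v) (subPD (proj2_sig u) (proj2_sig v)).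
Definition subopp (S : comNzRingType) (X : S -> Prop) (u : subT X) : subT X :=
  exist _ (- sval u) (subPN (proj2_sig u)).
Definition subscale (S : comNzRingType) (X : S -> Prop) (a : S) (u : subT X) : subT X :=
  exist _ (a * sval u) (subPM a (proj2_sig u)).

Lemma subT_eq (S : comNzRingType) (X : S -> Prop) (u v : subT X) : sval u = sval v -> u = v.
Proof. case: u v => [x hx] [y hy] /= exy; subst y; congr exist; exact: Prop_irrelevance. Qed.

Section Inst.
Variables (S : comNzRingType) (X : S -> Prop).
Lemma subaddA : associative (@subadd S X).
Proof. by move=> u v w; apply: subT_eq => /=; rewrite addrA. Qed.
Lemma subaddC : commutative (@subadd S X).
Proof. by move=> u v; apply: subT_eq => /=; rewrite addrC. Qed.
Lemma subadd0 : left_id (@sub0 S X) (@subadd S X).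
Proof. by move=> u; apply: subT_eq => /=; rewrite add0r. Qed.
Lemma subaddN : left_inverse (@sub0 S X) (@subopp S X) (@subadd S X).
Proof. by move=> u; apply: subT_eq => /=; rewrite addNr. Qed.
End Inst.
HB.instance Definition _ (S : comNzRingType) (X : S -> Prop) :=
  GRing.isZmodule.Build (subT X) (@subaddA S X) (@subaddC S X) (@subadd0 S X) (@subaddN S X).
Section Inst2.
Variables (S : comNzRingType) (X : S -> Prop).
Lemma subscaleA a b (v : subT X) : subscale a (subscale b v) = subscale (a * b) v.
Proof. by apply: subT_eq => /=; rewrite mulrA. Qed.
Lemma subscale1 : left_id 1 (@subscale S X).
Proof. by move=> v; apply: subT_eq => /=; rewrite mul1r. Qed.
Lemma subscaleDr : right_distributive (@subscale S X) (@subadd S X).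
Proof. by move=> a u v; apply: subT_eq => /=; rewrite mulrDr. Qed.
Lemma subscaleDl v : {morph (@subscale S X)^~ v : a b / a + b >-> subadd a b}.
Proof. by move=> a b; apply: subT_eq => /=; rewrite mulrDl. Qed.
End Inst2.
HB.instance Definition _ (S : comNzRingType) (X : S -> Prop) :=
  GRing.Zmodule_isLmodule.Build S (subT X) (@subscaleA S X) (@subscale1 S X) (@subscaleDr S X) (@subscaleDl S X).

Section Crit.
Variable S : comNzRingType.

Lemma nzd_cancel (b u v : S) : nonzerodivisor b -> b * u = b * v -> u = v.
Proof.
move=> hb h; apply/eqP; rewrite -subr_eq0; apply/eqP; apply: (hb).
by rewrite mulrBr h subrr.
Qed.

Lemma hom0 (M : lmodType S) (f : M -> S) : is_hom f -> f 0 = 0.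
Proof.
move=> h; have := h 1 0 0; rewrite scaler0 addr0 mul1r.
by rewrite -{1}(addr0 (f 0)) => /addrI.
Qed.
Lemma homZ (M : lmodType S) (f : M -> S) a x : is_hom f -> f (a *: x) = a * f x.
Proof. by move=> h; have := h a x 0; rewrite addr0 hom0 // addr0. Qed.

Lemma ideal_sum (X : S -> Prop) (T : Type) (F : T -> S) (s : seq T) :
  is_ideal X -> (forall p, List.In p s -> X (F p)) -> X (\sum_(p <- s) F p).
Proof.
move=> [h0 [hD _]]; elim: s => [|p s IH] hs; first by rewrite big_nil.
rewrite big_cons; apply: (hD); first by apply: (hs); left.
by apply: IH => p' hp'; apply: (hs); right.
Qed.

Lemma trace_ideal (M : lmodType S) : is_ideal (trace_of M).
Proof.
split; first by exists [::]; split => //; rewrite big_nil.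
split.
  move=> x y [s [hs ->]] [t [ht ->]]; exists (s ++ t); split; last by rewrite big_cat.
  by move=> p hp; case: (List.in_app_or _ _ _ hp) => ?; [apply: hs|apply: ht].
move=> a x [s [hs ->]]; exists (map (fun p => (p.1, a *: p.2)) s); split.
  move=> p hp; case: (proj1 (List.in_map_iff _ _ _) hp) => p0 [hp1 hp0]; rewrite -hp1 /=. apply: (hs). exact hp0.
rewrite big_map big_distrr /=.
elim: s hs => [|p s IH] hs; first by rewrite !big_nil.
rewrite !big_cons IH; last by move=> p' hp'; apply: (hs); right.
by rewrite homZ //; apply: (hs); left.
Qed.

Definition crit (X : S -> Prop) := forall a b : S, nonzerodivisor b ->
  (forall x, X x -> exists r, a * x = b * r) ->
  forall x, X x -> exists r, X r /\ a * x = b * r.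

Lemma crit_trace (M : lmodType S) (X : S -> Prop) :
  (forall x, X x <-> trace_of M x) -> crit X.
Proof.
move=> HX a b hb hab.
pose G (f : M -> S) (m : M) : S :=
  match pselect (exists r, a * f m = b * r) with left h => sval (cid h) | right _ => 0 end.
have Gspec : forall f m, is_hom f -> a * f m = b * G f m.
  move=> f m hf; rewrite /G; case: pselect => [h|h]; first by case: (cid h).
  exfalso; apply: (h); apply: (hab); apply/HX; exists [:: (f, m)]; split.
    by move=> p [<-|[]].
  by rewrite big_cons big_nil addr0.
have Ghom : forall f, is_hom f -> is_hom (G f).
  move=> f hf k m m'; apply: (nzd_cancel hb).
  by rewrite -Gspec // hf mulrDr mulrDr mulrCA [b * (k * _)]mulrCA -!Gspec.
move=> x /HX [s [hs ->]]; exists (\sum_(p <- s) G p.1 p.2); split.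
  apply/HX; exists (map (fun p => (G p.1, p.2)) s); split.
    by move=> p hp; case: (proj1 (List.in_map_iff _ _ _) hp) => [p0 [<- hp0]]; apply: (Ghom); apply: (hs).
  by rewrite big_map.
rewrite big_distrr big_distrr /=.
elim: s hs => [|p s IH] hs; first by rewrite !big_nil.
rewrite !big_cons IH; last by move=> p' hp'; apply: (hs); right.
by rewrite Gspec //; apply: (hs); left.
Qed.

Lemma in_T_iff (X : S -> Prop) :
  in_T X <-> is_ideal X /\ regular_ideal X /\ crit X.
Proof.
split.
  move=> [[M HM] hreg]; split; last by split => //; apply: crit_trace HM.
  have [h0 [hD hM]] := trace_ideal M.
  split; first by apply/HM.
  split; first by move=> x y /HM hx /HM hy; apply/HM; apply: (hD).
  by move=> a x /HM hx; apply/HM; apply: (hM).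
move=> [HI [[x0 [hx0 nx0]] hc]]; split; last by exists x0.
exists (subT X) => x; split.
  move=> hx; exists [:: ((fun m : subT X => sval m), exist _ x (fun _ => hx) : subT X)].
  split; last by rewrite big_cons big_nil addr0.
  by move=> p [<-|[]] k m m'.
move=> [s [hs ->]]; apply: ideal_sum => // [[g m]] /hs /= hg.
pose m0 : subT X := exist _ x0 (fun _ => hx0).
have key : forall m : subT X, x0 * g m = sval m * g m0.
  move=> m'; rewrite -!homZ //; congr g; apply: subT_eq => /=.
  by rewrite mulrC.
have := hc (g m0) x0 nx0 _ (sval m) (proj2_sig m HI).
case.
  move=> y hy; exists (g (exist _ y (fun _ => hy))).
  by rewrite mulrC (key (exist _ y (fun _ => hy))).
move=> r [hr e]; suff -> : g m = r by [].
by apply: (nzd_cancel nx0); rewrite key mulrC e.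
Qed.
End Crit.

Theorem corollary2p6
  (R : comNzRingType) (m : R -> Prop) (I : R -> Prop) (q : R)
  (Q : comUnitRingType) (iota : {rmorphism R -> Q})
  (A : comNzRingType) (j : {rmorphism A -> Q}) :
  one_dim_CM_local m ->
  in_T I ->
  I q ->
  (forall x, ideal_sq I x <-> ideal_scale q I x) ->
  total_ring_of_fractions iota ->
  injective j ->
  (forall z, colon_self iota I z <-> exists a, j a = z) ->
  (forall X : A -> Prop, in_T X ->
     exists Y : R -> Prop, in_T Y /\ subset_of Y I /\
       forall z : Q, (exists a, X a /\ j a = z) <->
                     (exists y, Y y /\ z = (iota q)^-1 * iota y)) /\
  (forall Y : R -> Prop, in_T Y -> subset_of Y I ->
     exists X : A -> Prop, in_T X /\
       forall z : Q, (exists a, X a /\ j a = z) <->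
                     (exists y, Y y /\ z = (iota q)^-1 * iota y)).
Proof.
move=> _ /in_T_iff [HI [[x0 [hx0 nx0]] cI]] hq hsq [iinj [iunit _]] jinj hA.
have [HI0 [HID HIM]] := HI.
have sq : forall y y', I y -> I y' -> exists s, I s /\ y * y' = q * s.
  move=> y y' hy hy'; have [] := proj1 (hsq (y * y')).
    exists [:: (y, y')]; split; first by move=> p [<-|[]].
    by rewrite big_cons big_nil addr0.
  by move=> s [hs e]; exists s.
have nq : nonzerodivisor q.
  have [s [_ e]] := sq _ _ hx0 hx0.
  move=> r hr; apply: (nx0); apply: (nx0).
  by rewrite mulrA e mulrAC hr mul0r.
have uq := iunit _ nq.
set iq := iota q.
have canq : forall z w : Q, z * iq = w * iq -> z = w by move=> z w; apply: (mulIr).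
have canb : forall b : R, nonzerodivisor b -> forall z w : Q, iota b * z = iota b * w -> z = w.
  by move=> b hb z w; apply: (mulrI); apply: (iunit).
have F3 : forall y, I y -> exists a, j a * iq = iota y.
  move=> y hy; have [a ea] : exists a, j a = iq^-1 * iota y.
    apply/hA => y' hy'; have [s [hs e]] := sq _ _ hy hy'; exists s; split => //.
    by rewrite -mulrA -rmorphM e rmorphM mulrA mulVr // mul1r.
  by exists a; rewrite ea mulrAC mulVr // mul1r.
have F3' : forall a, exists y, I y /\ j a * iq = iota y.
  move=> a; have := proj2 (hA (j a)) (ex_intro _ a erefl) q hq.
  by move=> [y [hy e]]; exists y.
have F4 : forall r, exists c, j c = iota r.
  move=> r; apply/hA => y hy; exists (r * y); split; first by apply: (HIM).
  by rewrite rmorphM.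
have jcan0 : forall c, j c = 0 -> c = 0.
  by move=> c hc; apply: (jinj); rewrite hc rmorph0.
have icancel : forall r r', iota r = iota r' -> r = r' by move=> r r'; apply: (iinj).
have icancel0 : forall r, iota r = 0 -> r = 0.
  by move=> r hr; apply: (iinj); rewrite hr rmorph0.
have uqE : forall z, iq^-1 * (z * iq) = z by move=> z; rewrite mulrCA mulVr // mulr1.
split.
- move=> X /in_T_iff [HX [[a0 [ha0 na0]] cX]].
  have [HX0 [HXD HXM]] := HX.
  pose Y := fun y : R => exists a, X a /\ iota y = j a * iq.
  have YI : subset_of Y I.
    move=> y [a [_ e]]; have [y' [hy' e']] := F3' a.
    by rewrite (icancel y y') // e e'.
  have rI : forall r, (exists s, r * q = q * s /\ I s) -> I r.
    by move=> r [s [e hs]]; rewrite (nzd_cancel nq (u := r) (v := s)) // mulrC.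
  exists Y; split; last split => //; last first.
    move=> z; split.
      move=> [a [ha <-]]; have [y [hy e]] := F3' a.
      by exists y; split; [exists a|rewrite -e uqE].
    by move=> [y [[a [ha e]] ->]]; exists a; split => //; rewrite e uqE.
  apply/in_T_iff; split; last split.
  + split; first by exists 0; split => //; rewrite !rmorph0 mul0r.
    split.
      move=> y y' [a [ha e]] [a' [ha' e']]; exists (a + a'); split; first by apply: (HXD).
      by rewrite !rmorphD e e' mulrDl.
    move=> r y [a [ha e]]; have [c ec] := F4 r; exists (c * a); split; first by apply: (HXM).
    by rewrite !rmorphM e ec mulrA.
  + have [y0 [hy0 e0]] := F3' a0; exists y0; split; first by exists a0.
    move=> r hr; have [c ec] := F4 r.
    have : j (a0 * c) * iq = 0 by rewrite rmorphM mulrAC e0 ec -rmorphM hr rmorph0.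
    rewrite -(mul0r iq) => /canq /jcan0 /na0 c0.
    by apply: (icancel0); rewrite -ec c0 rmorph0.
  + move=> a b nb hab.
    have [al eal] := F4 a; have [be ebe] := F4 b.
    have key : forall y r, Y y -> a * y = b * r -> I r.
      move=> y r [ay [hay ey]] e; apply: (rI).
      have [s [hs es]] : exists s, I s /\ r * q = q * s; last by exists s.
      apply: (cI r q nq _ q hq).
      move=> y' hy'; have [c' ec'] := F3 y' hy'.
      have [y'' [_ ey'']] := F3' (c' * ay).
      have Yy'' : Y y'' by exists (c' * ay); split => //; apply: (HXM).
      have [r'' er''] := hab y'' Yy''.
      exists r''; apply: (icancel); apply: (canb b nb).
      have h1 : iota b * iota r = iota a * iota y by rewrite -!rmorphM e.
      have h2 : iota b * iota r'' = iota a * iota y'' by rewrite -!rmorphM er''.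
      transitivity (iota a * iota y * iota y'); first by rewrite rmorphM mulrA h1.
      transitivity (iq * (iota b * iota r'')); last by rewrite rmorphM; ring.
      rewrite h2 -ey'' -ec' ey rmorphM; ring.
    have nbe : nonzerodivisor be.
      move=> c hc; have [s [_ es]] := F3' c.
      have : iota (b * s) = 0.
        by rewrite rmorphM -es -ebe mulrA -rmorphM hc rmorph0 mul0r.
      move/icancel0/nb => s0; apply: (jcan0); apply: (canq).
      by rewrite es s0 rmorph0 mul0r.
    have hyp : forall x, X x -> exists c, al * x = be * c.
      move=> x hx; have [yx [_ eyx]] := F3' x.
      have Yyx : Y yx by exists x.
      have [rx erx] := hab yx Yyx.
      have [c ec] := F3 rx (key _ _ Yyx erx).
      exists c; apply: (jinj); apply: (canq).
      rewrite !rmorphM eal ebe -mulrA eyx -mulrA ec -!rmorphM erx //.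
    move=> y [ay [hay ey]].
    have [c [hc ec]] := cX al be nbe hyp ay hay.
    have [r er] := hab y (ex_intro _ ay (conj hay ey)).
    exists r; split => //; exists c; split => //.
    apply: (canb b nb); rewrite -rmorphM -er rmorphM ey -eal -ebe mulrA -rmorphM ec.
    by rewrite rmorphM mulrA.
- move=> Y /in_T_iff [HY [[y0 [hy0 ny0]] cY]] YI.
  have [HY0 [HYD HYM]] := HY.
  pose X := fun a : A => exists y, Y y /\ j a * iq = iota y.
  exists X; split; last first.
    move=> z; split.
      by move=> [a [[y [hy e]] <-]]; exists y; split => //; rewrite -e uqE.
    move=> [y [hy ->]]; have [a ea] := F3 y (YI y hy).
    by exists a; split; [exists y|rewrite -ea uqE].
  apply/in_T_iff; split; last split.
  + split; first by exists 0; split => //; rewrite !rmorph0 mul0r.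
    split.
      move=> a a' [y [hy e]] [y' [hy' e']]; exists (y + y'); split; first by apply: (HYD).
      by rewrite !rmorphD mulrDl e e'.
    move=> c a [y [hy e]]; have [s [hs es]] := F3' c.
    have := cY s q nq _ y hy; case; last first.
      move=> r [hr er]; exists r; split => //; apply: canb nq _ _ _.
      by rewrite -rmorphM -er !rmorphM -es -e; ring.
    move=> y' hy'; have [a' ea'] := F3 y' (YI y' hy').
    have [r [_ er]] := F3' (c * a'); exists r; apply: (icancel).
    by rewrite !rmorphM -er -es -ea' rmorphM; ring.
  + have [a0 ea0] := F3 y0 (YI y0 hy0); exists a0; split; first by exists y0.
    move=> c hc; have [s [_ es]] := F3' c.
    have : iota (y0 * s) = 0.
      by rewrite rmorphM -es -ea0 mulrACA -rmorphM hc rmorph0 !mul0r.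
    move/icancel0/ny0 => s0; apply: (jcan0); apply: (canq).
    by rewrite es s0 rmorph0 mul0r.
  + move=> al be nbe hab.
    have [sa [_ esa]] := F3' al; have [sb [_ esb]] := F3' be.
    have nsb : nonzerodivisor sb.
      move=> r hr; have [c ec] := F4 r.
      have : j (be * c) * iq = 0 by rewrite rmorphM mulrAC esb ec -rmorphM hr rmorph0.
      rewrite -(mul0r iq) => /canq /jcan0 /nbe c0.
      by apply: (icancel0); rewrite -ec c0 rmorph0.
    have hyp : forall y, Y y -> exists r, sa * y = sb * r.
      move=> y hy; have [ay eay] := F3 y (YI y hy).
      have [c ec] := hab ay (ex_intro _ y (conj hy eay)).
      have [t [_ et]] := F3' c; exists t; apply: (icancel).
      rewrite !rmorphM -esa -esb -eay -et.
      have h : j al * j ay = j be * j c by rewrite -!rmorphM ec.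
      transitivity (j al * j ay * iq * iq); first by ring.
      by rewrite h; ring.
    move=> x [yx [hyx eyx]]; have [r [hr er]] := cY sa sb nsb hyp yx hyx.
    have [c ec] := F3 r (YI r hr); exists c; split; first by exists r.
    apply: (jinj); apply: (canq); apply: (canq).
    rewrite !rmorphM.
    transitivity (j al * iq * (j x * iq)); first by ring.
    rewrite esa eyx -rmorphM er rmorphM -esb -ec; ring.
Qed.
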